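(* Let $k\ge1$ and $d$ be integers with $k\mid d$, and set $m=d/k$. Let $X_{ij}\in\mathbb{R}^{1\times m}$ for $i=1,\dots,n$, $j=1,\dots,k$, let $w^*\in\mathbb{R}^m$, and suppose $X_{ij}w^*\neq0$ for all $i,j$. Let $y_i=\sum_{j=1}^k(X_{ij}w^* )_+$ and $r\in\mathbb{R}^m$. Consider the linear program $$\max_{w\in\mathbb{R}^m,\ z\in\mathbb{R}^{n\times k}}\ r^Tw\quad\text{s.t.}\quad z_{ij}\ge0,\ \ \sum_{j=1}^kz_{ij}=y_i\ (i=1,\dots,n),\ \ z_{ij}\ge X_{ij}w\ \ \forall (i,j).$$ For $i=1,\dots,n$ let $R_i=\{j\in\{1,\dots,k\}: X_{ij}w^*>0\}$. Then the feasible point $(w^*,z^* )$ with $z^*_{ij}=(X_{ij}w^* )_+$ is an optimal solution of this linear program if and only if $$r\in\operatorname{cone}\Big\{\textstyle\sum_{j\in R_i}X_{ij}^T:\ i=1,\dots,n\Big\},$$ equivalently, iff there exists $v\in\mathbb{R}^n$ with $v_{S_j}\ge0$ for all $j$ and $\sum_{j=1}^kX_{S_j,j}^Tv_{S_j}=r$, where $S_j=\{i: X_{ij}w^*>0\}$, $v_{S_j}$ is the subvector of $v$ indexed by $S_j$, and $X_{S_j,j}$ is the matrix with rows $X_{ij}$, $i\in S_j$.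
   Context: This models a one-hidden-layer convolutional network with a filter $w\in\mathbb{R}^{d/k}$ applied without overlap: $X_{ij}$ is the $j$-th length-$d/k$ block of the $i$-th data vector. $(u)_+=\max(u,0)$; $\operatorname{cone}(A)$ denotes the set of nonnegative linear combinations of vectors in $A$; an empty sum is the zero vector. *)

(* Defs.v *)
(* the statement is purely order-algebraic (an LP optimality
   criterion), so it is stated over an arbitrary real field R. *)
From HB Require Import structures.
From mathcomp Require Import all_boot all_order all_algebra.
Set Implicit Arguments. Unset Strict Implicit. Unset Printing Implicit Defensive.
Import Order.TTheory GRing.Theory Num.Theory.
Local Open Scope ring_scope.

Definition pospart (R : realFieldType) (u : R) : R := Num.max u 0.

Definition rdot (R : realFieldType) (m : nat) (x : 'rV[R]_m) (w : 'cV[R]_m) : R :=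
  (x *m w) 0 0.

Definition labels (R : realFieldType) (n k m : nat)
  (X : 'I_n -> 'I_k -> 'rV[R]_m) (wstar : 'cV[R]_m) (i : 'I_n) : R :=
  \sum_(j < k) pospart (rdot (X i j) wstar).

Definition lp_feasible (R : realFieldType) (n k m : nat)
  (X : 'I_n -> 'I_k -> 'rV[R]_m) (y : 'I_n -> R)
  (w : 'cV[R]_m) (z : 'M[R]_(n, k)) : Prop :=
  [/\ forall i j, 0 <= z i j,
      forall i, \sum_(j < k) z i j = y i
    & forall i j, rdot (X i j) w <= z i j].

Definition lp_obj (R : realFieldType) (m : nat) (r w : 'cV[R]_m) : R :=
  (r^T *m w) 0 0.

Definition lp_optimal (R : realFieldType) (n k m : nat)
  (X : 'I_n -> 'I_k -> 'rV[R]_m) (y : 'I_n -> R) (r : 'cV[R]_m)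
  (w : 'cV[R]_m) (z : 'M[R]_(n, k)) : Prop :=
  lp_feasible X y w z /\
  forall w' z', lp_feasible X y w' z' -> lp_obj r w' <= lp_obj r w.

Definition in_cone (R : realFieldType) (n m : nat)
  (F : 'I_n -> 'cV[R]_m) (v : 'cV[R]_m) : Prop :=
  exists c : 'I_n -> R, (forall i, 0 <= c i) /\ v = \sum_(i < n) c i *: F i.

(* Main.v *)
Require Import Defs.
From HB Require Import structures.
From mathcomp Require Import all_boot all_order all_algebra.
From mathcomp Require Import ring lra.
Set Implicit Arguments. Unset Strict Implicit. Unset Printing Implicit Defensive.
Import Order.TTheory GRing.Theory Num.Theory.
Local Open Scope ring_scope.

Section Farkas.
Variable R : realFieldType.
Variable m : nat.
Definition dot (u v : 'cV[R]_m) : R := \sum_(l < m) u l 0 * v l 0.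

Lemma dotDl u v w : dot (u + v) w = dot u w + dot v w.
Proof. rewrite /dot -big_split; apply: eq_bigr => l _; by rewrite !mxE mulrDl. Qed.
Lemma dotBl u v w : dot (u - v) w = dot u w - dot v w.
Proof. rewrite /dot -sumrB; apply: eq_bigr => l _; by rewrite !mxE mulrBl. Qed.
Lemma dotZl a u w : dot (a *: u) w = a * dot u w.
Proof. rewrite /dot mulr_sumr; apply: eq_bigr => l _; by rewrite !mxE mulrA. Qed.
Lemma dotC u v : dot u v = dot v u.
Proof. rewrite /dot; apply: eq_bigr => l _; by rewrite mulrC. Qed.
Lemma dotDr u v w : dot w (u + v) = dot w u + dot w v.
Proof. by rewrite !(dotC w) dotDl. Qed.
Lemma dotBr u v w : dot w (u - v) = dot w u - dot w v.
Proof. by rewrite !(dotC w) dotBl. Qed.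
Lemma dotZr a u w : dot w (a *: u) = a * dot w u.
Proof. by rewrite !(dotC w) dotZl. Qed.
Lemma dot0l w : dot 0 w = 0.
Proof. by rewrite /dot big1 // => l _; rewrite mxE mul0r. Qed.
Lemma dot_suml I (s : seq I) (P : pred I) (F : I -> 'cV[R]_m) w :
  dot (\sum_(i <- s | P i) F i) w = \sum_(i <- s | P i) dot (F i) w.
Proof. by apply: (big_morph (fun u => dot u w)) => [u v|]; rewrite ?dotDl ?dot0l. Qed.

Lemma dot_gt0 r : r != 0 -> 0 < dot r r.
Proof.
move=> rn0.
have [/existsP [l hl]|] := boolP [exists l, r l 0 != 0].
  rewrite /dot (bigD1 l) //=; apply: ltr_pwDl.
    by rewrite -expr2 exprn_even_gt0.
  by apply: sumr_ge0 => i _; rewrite -expr2 sqr_ge0.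
move=> /existsPn hall; case/negP: rn0; apply/eqP/matrixP => i j.
by rewrite (ord1 j) !mxE; move: (hall i); rewrite negbK => /eqP.
Qed.

Lemma farkas (n : nat) : forall (a : nat -> 'cV[R]_m) (r : 'cV[R]_m),
  (exists c : nat -> R, (forall i, 0 <= c i) /\ r = \sum_(i < n) c i *: a i) \/
  (exists d, (forall i, (i < n)%N -> dot (a i) d <= 0) /\ 0 < dot r d).
Proof.
elim: n => [|n IH] a r.
  have [->|rn0] := eqVneq r 0.
    by left; exists (fun _ => 0); split => // ; rewrite big_ord0.
  by right; exists r; split => //; exact: dot_gt0.
case: (IH a r) => [[c [c0 hr]]|[d [hd hrd]]].
  left; exists (fun i => if (i < n)%N then c i else 0); split.
    by move=> i; case: ifP.
  rewrite big_ord_recr /= ltnn scale0r addr0 hr.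
  by apply: eq_bigr => i _; rewrite /= ltn_ord.
have [hn|hn] := leP (dot (a n) d) 0.
  right; exists d; split => // i; rewrite ltnS leq_eqVlt => /orP [/eqP ->//|].
  exact: hd.
set p := dot (a n) d.
have pn0 : p != 0 by rewrite gt_eqF.
pose b i := a i - (dot (a i) d / p) *: a n.
pose s := r - (dot r d / p) *: a n.
case: (IH b s) => [[c [c0 hs]]|[d' [hd' hsd']]].
  left; exists (fun i => if (i < n)%N then c i else
                  (dot r d - \sum_(i < n) c i * dot (a i) d) / p).
  split.
    move=> i; case: ifP => // _; apply: divr_ge0; last exact: ltW.
    rewrite subr_ge0; apply: (le_trans _ (ltW hrd)); apply: sumr_le0 => j _.
    by rewrite mulr_ge0_le0 // hd.
  rewrite big_ord_recr /= ltnn.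
  have -> : \sum_(i < n) (if (i < n)%N then c i else
                  (dot r d - \sum_(i < n) c i * dot (a i) d) / p) *: a i
            = \sum_(i < n) c i *: a i by apply: eq_bigr => i _; rewrite ltn_ord.
  have er : r = s + (dot r d / p) *: a n by rewrite /s subrK.
  rewrite {1}er hs /b.
  rewrite (eq_bigr (fun i : 'I_n => c i *: a i - (c i * (dot (a i) d / p)) *: a n)); last first.
    by move=> i _; rewrite scalerBr scalerA.
  rewrite sumrB -scaler_suml.
  rewrite -addrA; congr (_ + _).
  rewrite -scaleNr -scalerDl; congr (_ *: _).
  rewrite mulrBl addrC; congr (_ - _); rewrite mulr_suml.
  by apply: eq_bigr => i _; rewrite mulrA.
right; exists (d' - (dot (a n) d' / p) *: d); split.
  move=> i; rewrite ltnS leq_eqVlt => /orP [/eqP ->|hi].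
    by rewrite dotBr dotZr -/p divfK // subrr.
  move: (hd' i hi); rewrite /b dotBl dotZl dotBr dotZr.
  suff -> : dot (a n) d' / p * dot (a i) d = dot (a i) d / p * dot (a n) d' by [].
  ring.
move: hsd'; rewrite /s dotBl dotZl dotBr dotZr.
suff -> : dot (a n) d' / p * dot r d = dot r d / p * dot (a n) d' by [].
ring.
Qed.
End Farkas.

Section Main.
Variable R : realFieldType.

Lemma rdot_dot m (x : 'rV[R]_m) w : rdot x w = dot x^T w.
Proof. rewrite /rdot /dot mxE; apply: eq_bigr => l _; by rewrite !mxE. Qed.
Lemma obj_dot m (r w : 'cV[R]_m) : lp_obj r w = dot r w.
Proof. rewrite /lp_obj /dot mxE; apply: eq_bigr => l _; by rewrite !mxE. Qed.
Lemma pospart_pos (u : R) : 0 <= u -> pospart u = u.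
Proof. by move=> h; rewrite /pospart max_l. Qed.
Lemma pospart_neg (u : R) : u <= 0 -> pospart u = 0.
Proof. by move=> h; rewrite /pospart max_r. Qed.
Lemma pospart_ge0 (u : R) : 0 <= pospart u.
Proof. by rewrite /pospart le_max lexx orbT. Qed.
Lemma pospart_ge (u : R) : u <= pospart u.
Proof. by rewrite /pospart le_max lexx. Qed.

Variables (n k m : nat) (hk : (0 < k)%N) (X : 'I_n -> 'I_k -> 'rV[R]_m)
  (wstar : 'cV[R]_m) (hnz : forall i j, rdot (X i j) wstar != 0) (r : 'cV[R]_m).

Let A i := \sum_(j < k | 0 < rdot (X i j) wstar) (X i j)^T.

Lemma dotA i w : dot (A i) w = \sum_(j < k | 0 < rdot (X i j) wstar) rdot (X i j) w.
Proof. by rewrite /A dot_suml; apply: eq_bigr => j _; rewrite rdot_dot. Qed.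

Lemma labelsA i : labels X wstar i = dot (A i) wstar.
Proof.
rewrite dotA /labels [RHS]big_mkcond /=; apply: eq_bigr => j _.
case: ifP => h; first by rewrite pospart_pos // ltW.
by rewrite pospart_neg // leNgt h.
Qed.

Let zstar : 'M[R]_(n, k) := \matrix_(i, j) pospart (rdot (X i j) wstar).

Lemma zstar_feas : lp_feasible X (labels X wstar) wstar zstar.
Proof.
split.
- by move=> i j; rewrite mxE pospart_ge0.
- by move=> i; rewrite /labels; apply: eq_bigr => j _; rewrite mxE.
- by move=> i j; rewrite mxE pospart_ge.
Qed.

Lemma cone_opt : in_cone A r -> lp_optimal X (labels X wstar) r wstar zstar.
Proof.
move=> [c [c0 hr]]; split; first exact: zstar_feas.
move=> w' z' [hz0 hzs hzX]; rewrite !obj_dot hr !dot_suml.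
apply: ler_sum => i _; rewrite !dotZl; apply: ler_wpM2l; first exact: c0.
rewrite -labelsA -hzs dotA.
apply: (le_trans (y := \sum_(j < k | 0 < rdot (X i j) wstar) z' i j)).
  by apply: ler_sum => j _; apply: hzX.
rewrite [X in _ <= X](bigID (fun j => 0 < rdot (X i j) wstar)) /= lerDl.
by apply: sumr_ge0 => j _; apply: hz0.
Qed.

Lemma opt_cone : lp_optimal X (labels X wstar) r wstar zstar -> in_cone A r.
Proof.
move=> [_ hopt].
pose an (l : nat) : 'cV[R]_m := if @insub _ (fun l => (l < n)%N) 'I_n l is Some i then A i else 0.
have hA : forall i : 'I_n, an i = A i by move=> i; rewrite /an valK.
case: (farkas n an r) => [[c [c0 hr]]|[dd [hdd hrd]]].
  exists (fun i => c i); split => //; rewrite hr; apply: eq_bigr => i _.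
  by rewrite hA.
exfalso.
have hAd : forall i, dot (A i) dd <= 0 by move=> i; rewrite -hA; apply: hdd.
pose u i j := rdot (X i j) wstar. pose e i j := rdot (X i j) dd.
pose S := \sum_i \sum_j `|e i j| / `|u i j|.
have S0 : 0 <= S.
  by apply: sumr_ge0 => i _; apply: sumr_ge0 => j _; apply: divr_ge0.
pose t := (1 + S)^-1.
have S1 : 0 < 1 + S by apply: ltr_wpDr.
have t0 : 0 < t by rewrite invr_gt0.
have key : forall i j, t * `|e i j| < `|u i j|.
  move=> i j; have hu : 0 < `|u i j| by rewrite normr_gt0 hnz.
  have hq : `|e i j| / `|u i j| <= S.
    rewrite /S (bigD1 i) //= (bigD1 j) //= -addrA lerDl.
    apply: addr_ge0; first by apply: sumr_ge0 => l _; apply: divr_ge0.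
    by apply: sumr_ge0 => l _; apply: sumr_ge0 => l' _; apply: divr_ge0.
  rewrite /t mulrC ltr_pdivrMr //.
  rewrite -{1}(divfK (x := `|u i j|) _ `|e i j|); last by rewrite gt_eqF.
  rewrite mulrC; apply: (le_lt_trans (ler_wpM2l (ltW hu) hq)).
  by rewrite ltr_pM2l // ltrDr.
pose w' := wstar + t *: dd.
have hw' : forall i j, rdot (X i j) w' = u i j + t * e i j.
  by move=> i j; rewrite /u /e !rdot_dot dotDr dotZr.
have sgn : forall i j, if 0 < u i j then 0 <= rdot (X i j) w' else rdot (X i j) w' <= 0.
  move=> i j; rewrite hw'; have := key i j.
  have h1 : t * e i j <= t * `|e i j| by rewrite ler_pM2l // ler_norm.
  have h2 : - (t * e i j) <= t * `|e i j|.
    by rewrite -mulrN ler_pM2l // -normrN ler_norm.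
  case: ifP => hp.
    rewrite (gtr0_norm hp) => hk'; apply: ltW.
    apply: (lt_le_trans (y := u i j - t * `|e i j|)); first by rewrite subr_gt0.
    by rewrite lerD2l lerNl.
  have hn : u i j < 0 by rewrite lt_neqAle hnz /= leNgt hp.
  rewrite (ltr0_norm hn) => hk'; apply: ltW.
  apply: (le_lt_trans (y := u i j + t * `|e i j|)); first by rewrite lerD2l.
  by rewrite -ltrBrDl sub0r.
pose sp i := \sum_(j < k) pospart (rdot (X i j) w').
have hsp : forall i, sp i <= labels X wstar i.
  move=> i; have -> : sp i = dot (A i) w'.
    rewrite dotA /sp [RHS]big_mkcond /=; apply: eq_bigr => j _.
    move: (sgn i j); rewrite /u; case: ifP => _ h.
      by rewrite pospart_pos.
    by rewrite pospart_neg.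
  rewrite labelsA /w' dotDr dotZr gerDl.
  by apply: mulr_ge0_le0; [exact: ltW|exact: hAd].
pose j0 : 'I_k := Ordinal hk.
pose z' : 'M[R]_(n, k) := \matrix_(i, j) (pospart (rdot (X i j) w') +
   (if j == j0 then labels X wstar i - sp i else 0)).
have hf : lp_feasible X (labels X wstar) w' z'.
  split.
  - move=> i j; rewrite mxE; apply: addr_ge0; first exact: pospart_ge0.
    by case: ifP => // _; rewrite subr_ge0.
  - move=> i; rewrite (eq_bigr (fun j => pospart (rdot (X i j) w') +
       (if j == j0 then labels X wstar i - sp i else 0))); last by move=> j _; rewrite mxE.
    by rewrite big_split /= -big_mkcond big_pred1_eq -/(sp i) addrC subrK.
  - move=> i j; rewrite mxE; apply: (le_trans (pospart_ge _)); rewrite lerDl.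
    by case: ifP => // _; rewrite subr_ge0.
move: (hopt w' z' hf); rewrite !obj_dot /w' dotDr dotZr gerDl leNgt.
by rewrite mulr_gt0.
Qed.

Lemma cone_v : in_cone A r <->
     exists v : 'I_n -> R,
       (forall j : 'I_k, forall i : 'I_n, 0 < rdot (X i j) wstar -> 0 <= v i) /\
       \sum_(j < k) \sum_(i < n | 0 < rdot (X i j) wstar) v i *: (X i j)^T = r.
Proof.
have E : forall v : 'I_n -> R,
    \sum_(j < k) \sum_(i < n | 0 < rdot (X i j) wstar) v i *: (X i j)^T
    = \sum_(i < n) v i *: A i.
  move=> v; rewrite (eq_bigr (fun j : 'I_k => \sum_(i < n)
     (if 0 < rdot (X i j) wstar then v i *: (X i j)^T else 0))); last first.
    by move=> j _; rewrite big_mkcond.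
  rewrite exchange_big /=; apply: eq_bigr => i _.
  rewrite /A scaler_sumr [RHS]big_mkcond /=. by apply: eq_bigr => j _; case: ifP.
split.
  move=> [c [c0 hr]]; exists c; split; first by move=> j i _; apply: c0.
  by rewrite E hr.
move=> [v [v0 hv]].
exists (fun i => if [exists j, 0 < rdot (X i j) wstar] then v i else 0); split.
  by move=> i; case: ifP => // /existsP [j hj]; apply: (v0 j).
rewrite -hv E; apply: eq_bigr => i _; case: ifP => // /existsPn hn.
rewrite /A big1 ?scaler0 // => j hj.
by move: (hn j); rewrite hj.
Qed.

End Main.

Theorem mainTheorem3 (R : realFieldType) (n k d : nat)
  (hk : (0 < k)%N) (hkd : (k %| d)%N)
  (X : 'I_n -> 'I_k -> 'rV[R]_(d %/ k)) (wstar : 'cV[R]_(d %/ k))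
  (hnz : forall i j, rdot (X i j) wstar != 0)
  (r : 'cV[R]_(d %/ k)) :
  let y := labels X wstar in
  let zstar : 'M[R]_(n, k) := \matrix_(i, j) pospart (rdot (X i j) wstar) in
  (lp_optimal X y r wstar zstar <->
     in_cone (fun i => \sum_(j < k | 0 < rdot (X i j) wstar) (X i j)^T) r)
  /\
  (lp_optimal X y r wstar zstar <->
     exists v : 'I_n -> R,
       (forall j : 'I_k, forall i : 'I_n, 0 < rdot (X i j) wstar -> 0 <= v i) /\
       \sum_(j < k) \sum_(i < n | 0 < rdot (X i j) wstar) v i *: (X i j)^T = r).
Proof.
move=> y zstar.
have H1 : lp_optimal X y r wstar zstar <->
     in_cone (fun i => \sum_(j < k | 0 < rdot (X i j) wstar) (X i j)^T) r.
  split; [exact: (opt_cone hk hnz) | exact: cone_opt].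
split => //; rewrite H1; exact: cone_v.
Qed.
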